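(* Let $K$ be a field, $S=K[x_1,\ldots,x_n]$, $I\subset S$ a monomial ideal with $I\ne S$, with $\mathbb{Z}^n$-graded minimal free resolution of $S/I$, multidegrees $a_{ij}$ and scalar matrices $\lambda^{(i)}$ as in the context. Let $1\le i\le p$ and let $\mu=(\mu_1,\ldots,\mu_{\beta_i})^T\in K^{\beta_i}$ with $\lambda^{(i)}\mu=0$. Let $k_1<\cdots<k_r$ be the indices with $\mu_{k_t}\ne0$. Then there exists $\rho=(\rho_1,\ldots,\rho_{\beta_{i+1}})^T\in K^{\beta_{i+1}}$ with $\lambda^{(i+1)}\rho=\mu$ and such that $x^{a_{i+1,j}}$ divides $\operatorname{lcm}(x^{a_{ik_1}},\ldots,x^{a_{ik_r}})$ for all $j$ with $\rho_j\ne0$.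
   Context: For $a\in\mathbb{N}^n$, $x^a=x_1^{a(1)}\cdots x_n^{a(n)}$. Let $0\to F_p\to\cdots\to F_1\to F_0\to S/I\to 0$ be the $\mathbb{Z}^n$-graded minimal free resolution of $S/I$ with differential $\partial$, where $F_0=S$ with basis $f_{01}$ of degree $0$, and $F_i=\bigoplus_{j=1}^{\beta_i}Sf_{ij}$ with $f_{ij}$ homogeneous of multidegree $a_{ij}\in\mathbb{N}^n$; set $\beta_{p+1}=0$ and $\lambda^{(p+1)}$ the empty matrix. Write $\partial(f_{ij})=\sum_k\lambda^{(i)}_{kj}x^{a_{ij}-a_{i-1,k}}f_{i-1,k}$ with $\lambda^{(i)}_{kj}\in K$, where $\lambda^{(i)}_{kj}=0$ whenever $a_{ij}-a_{i-1,k}\notin\mathbb{N}^n$; $\lambda^{(i)}=(\lambda^{(i)}_{kj})\in K^{\beta_{i-1}\times\beta_i}$. The lcm of an empty family is $1$. *)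

(* Defs.v *)
From HB Require Import structures.
From mathcomp Require Import all_boot all_order all_algebra.
From mathcomp Require Import multinomials.mpoly.
Set Implicit Arguments. Unset Strict Implicit. Unset Printing Implicit Defensive.
Import GRing.Theory.
Local Open Scope ring_scope.

Definition poly_dvd (K : fieldType) (n : nat) (f g : {mpoly K[n]}) : Prop :=
  exists q : {mpoly K[n]}, g = q * f.

(* lcm of a finite family of exponent vectors (lcm of the empty family is 0,
   i.e. the monomial 1). *)
Definition mlcm_seq (n : nat) (s : seq 'X_{1..n}) : 'X_{1..n} :=
  foldr (@mlcm n) 0%MM s.

Definition is_ideal (K : fieldType) (n : nat) (I : {pred {mpoly K[n]}}) : Prop :=
  [/\ 0 \in I, (forall f g, f \in I -> g \in I -> f + g \in I)
    & (forall f g, g \in I -> f * g \in I)].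

Definition monomial_ideal (K : fieldType) (n : nat) (I : {pred {mpoly K[n]}}) : Prop :=
  is_ideal I /\
  forall f, f \in I -> exists s : seq ('X_{1..n} * {mpoly K[n]}),
      all (fun x => 'X_[x.1] \in I) s /\ f = \sum_(x <- s) x.2 * 'X_[x.1].

(* Indexing convention: beta i = rank of F_i, a i j = multidegree of f_ij
   (j zero-based), and lam i = lambda^(i+1), a beta_i x beta_(i+1) matrix.
   diff i = matrix of the differential d_{i+1} : F_{i+1} -> F_i, acting on
   column vectors: entry (k,j) = lam i k j * x^(a (i+1) j - a i k). *)
Definition diff (K : fieldType) (n : nat) (beta : nat -> nat)
  (a : forall i, 'I_(beta i) -> 'X_{1..n})
  (lam : forall i, 'M[K]_(beta i, beta i.+1)) (i : nat)
  : 'M[{mpoly K[n]}]_(beta i, beta i.+1) :=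
  \matrix_(k, j) (lam i k j *: 'X_[(a i.+1 j - a i k)%MM]).

Definition is_graded_min_free_res (K : fieldType) (n : nat)
  (I : {pred {mpoly K[n]}}) (p : nat) (beta : nat -> nat)
  (a : forall i, 'I_(beta i) -> 'X_{1..n})
  (lam : forall i, 'M[K]_(beta i, beta i.+1)) : Prop :=
  [/\ beta 0 = 1%N,
      (forall k, a 0 k = 0%MM),
      (forall i, (p < i)%N -> beta i = 0%N) &
   [/\
      (forall i k j, lam i k j != 0 -> (a i k <= a i.+1 j)%MM),
      (* minimality: all entries of the differentials lie in (x_1..x_n) *)
      (forall i k j, lam i k j != 0 -> a i k != a i.+1 j),
      (forall i (v : 'cV[{mpoly K[n]}]_(beta i.+1)),
          diff a lam i *m v = 0 <->
          exists w : 'cV[{mpoly K[n]}]_(beta i.+2), v = diff a lam i.+1 *m w)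
    & (* exactness at F_0: image of d_1 is the kernel I of S -> S/I *)
      (forall f : {mpoly K[n]}, f \in I <->
          exists w : 'cV[{mpoly K[n]}]_(beta 1),
            forall k : 'I_(beta 0), (diff a lam 0 *m w) k 0 = f)]].

(* Main.v *)
Require Import Defs.
From HB Require Import structures.
From mathcomp Require Import all_boot all_order all_algebra.
From mathcomp Require Import multinomials.mpoly.
From mathcomp Require Import zify.
Import GRing.Theory.
Local Open Scope ring_scope.

Lemma coefX (K : fieldType) (n : nat) (d L : 'X_{1..n}) (f : {mpoly K[n]}) :
  ('X_[d] * f)@_L = if (d <= L)%MM then f@_(L - d)%MM else 0.
Proof.
case: ifP => hle.
  by rewrite mulrC -{1}(submK hle) addmC mcoeffMX.
apply/eqP; apply: contraFT hle; rewrite -mcoeff_msupp mulrC.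
rewrite (perm_mem (msuppMX f d)) => /mapP [m' _ ->]; exact: lem_addr.
Qed.

Lemma mlcm_seq_ge (n : nat) (s : seq 'X_{1..n}) x :
  x \in s -> (x <= mlcm_seq s)%MM.
Proof.
elim: s => [//|y s IH]; rewrite inE => /orP [/eqP ->|hx] /=.
  exact: lem_mlcml.
exact: lepm_trans (IH hx) (lem_mlcmr _ _).
Qed.

Theorem lemma1p8 (K : fieldType) (n : nat) (I : {pred {mpoly K[n]}})
  (p : nat) (beta : nat -> nat)
  (a : forall i, 'I_(beta i) -> 'X_{1..n})
  (lam : forall i, 'M[K]_(beta i, beta i.+1)) :
  monomial_ideal I -> ~ (1 \in I) ->
  is_graded_min_free_res I p a lam ->
  forall (m : nat), (m < p)%N ->
  forall mu : 'cV[K]_(beta m.+1), lam m *m mu = 0 ->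
  exists rho : 'cV[K]_(beta m.+2),
    lam m.+1 *m rho = mu /\
    forall j, rho j 0 != 0 ->
      poly_dvd ('X_[a m.+2 j] : {mpoly K[n]})
        'X_[mlcm_seq [seq a m.+1 k | k <- enum 'I_(beta m.+1) & mu k 0 != 0]].
Proof.
move=> _ _ [_ _ _ [Hle _ Hex _]] m _ mu Hmu.
set L := mlcm_seq _.
have HL : forall k, mu k 0 != 0 -> (a m.+1 k <= L)%MM.
  move=> k hk; apply: mlcm_seq_ge; apply: map_f.
  by rewrite mem_filter hk mem_enum.
pose v : 'cV[{mpoly K[n]}]_(beta m.+1) :=
  \col_k (mu k 0 *: 'X_[L - a m.+1 k]).
have Hv : diff a lam m *m v = 0.
  apply/matrixP => k' j'; rewrite !mxE.
  transitivity (\sum_k (lam m k' k * mu k 0) *: ('X_[L - a m k'] : {mpoly K[n]})).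
    apply: eq_bigr => k _; rewrite !mxE.
    have [->|hl] := eqVneq (lam m k' k) 0; first by rewrite !scale0r !mul0r scale0r.
    have [->|hm] := eqVneq (mu k 0) 0; first by rewrite !scale0r mulr0 mulr0 scale0r.
    rewrite -scalerAl -scalerAr scalerA -mpolyXD.
    congr (_ *: 'X_[_]).
    move: (Hle _ _ _ hl) (HL _ hm) => /mnm_lepP h1 /mnm_lepP h2.
    apply/mnmP => i; rewrite mnmDE !mnmBE; move: (h1 i) (h2 i); lia.
  rewrite -scaler_suml.
  have -> : \sum_k lam m k' k * mu k 0 = (lam m *m mu) k' 0 by rewrite mxE.
  by rewrite Hmu mxE scale0r.
have [w Hw] := proj1 (Hex m v) Hv.
exists (\col_j ('X_[a m.+2 j] * w j 0)@_L); split.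
  apply/matrixP => k j; rewrite (ord1 j) {j} !mxE.
  transitivity (('X_[a m.+1 k] * v k 0)@_L); last first.
    rewrite mxE.
    have [->|hm] := eqVneq (mu k 0) 0; first by rewrite scale0r mulr0 mcoeff0.
    rewrite -scalerAr mcoeffZ -mpolyXD addmC submK ?HL //.
    by rewrite mcoeffX eqxx mulr1.
  rewrite Hw mxE mulr_sumr raddf_sum /=; apply: eq_bigr => j _; rewrite !mxE.
  have [->|hl] := eqVneq (lam m.+1 k j) 0; first by rewrite !scale0r ?mul0r ?mulr0 ?mcoeff0 ?mul0r.
  rewrite -scalerAl -scalerAr mcoeffZ mulrA -mpolyXD addmC submK ?Hle //.
move=> j; rewrite mxE coefX; case: ifP => hle; last by rewrite eqxx.
move=> _; exists 'X_[L - a m.+2 j]; by rewrite -mpolyXD submK.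
Qed.
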